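(* Let $n\le N$ be positive integers and $r>0$. Let $\mathcal G_1,\mathcal G_2$ be nonempty families of subsets of $[N]$, each member having at most $n$ elements, and suppose both $\mathcal G_1$ and $\mathcal G_2$ are $r$-spread. If $r\ge 2^{12}\log_2(2n)$, then there exist $G_1\in\mathcal G_1$ and $G_2\in\mathcal G_2$ with $G_1\cap G_2=\emptyset$.
   Context: A family $\mathcal G$ of subsets of $[N]$ is $r$-spread if for every $S\subseteq[N]$, $|\{G\in\mathcal G: S\subseteq G\}|\le r^{-|S|}|\mathcal G|$. *)

(* Defs.v *)
From mathcomp Require Import all_boot all_order all_algebra.
From mathcomp Require Import all_classical all_reals all_analysis.
Set Implicit Arguments. Unset Strict Implicit. Unset Printing Implicit Defensive.
Import Order.TTheory GRing.Theory Num.Theory.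
Local Open Scope ring_scope.

Definition spread (R : realType) (N : nat) (r : R) (F : {set {set 'I_N}}) : Prop :=
  forall S : {set 'I_N},
    (#|[set G in F | S \subset G]|%:R : R) <= r ^- #|S| * (#|F|%:R).

Definition log2 (R : realType) (x : R) : R := ln x / ln 2.

(* Main.v *)
Require Import Defs.
From mathcomp Require Import all_boot all_order all_algebra.
From mathcomp Require Import lra zify.
Set Implicit Arguments. Unset Strict Implicit. Unset Printing Implicit Defensive.
Import Order.TTheory GRing.Theory Num.Theory.


Local Open Scope ring_scope.
Lemma geo (R : realFieldType) (z : R) L : 0 <= z -> z <= 1 / 2 ->
  \sum_(i < L) z ^+ (L - i) <= 2 * z.
Proof.
move=> z0 z2; elim: L => [|L IH]; first by rewrite big_ord0 mulr_ge0.
rewrite big_ord_recr /= subSnn expr1.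
have -> : \sum_(i < L) z ^+ (L.+1 - i) =
          z * \sum_(i < L) z ^+ (L - i).
  rewrite mulr_sumr; apply: eq_bigr => i _ /=.
  by rewrite subSn ?exprS // ltnW.
apply: (@le_trans _ _ (z * (2 * z) + z)).
  by rewrite lerD2r; apply: ler_wpM2l.
nra.
Qed.
Local Close Scope ring_scope.

Section Rounds.
Variables (N M n : nat) (F : {set {set 'I_N}}).

Notation col := {ffun 'I_N -> 'I_M.+1}.
Implicit Types (Ti : {set 'I_N} -> {set 'I_N}) (W A X Y : {set 'I_N}) (k : nat) (c : col).

Definition Wc (c : col) (i : nat) : {set 'I_N} := [set x | nat_of_ord (c x) == i].
Definition Rc (c : col) (i : nat) : {set 'I_N} := [set x | (c x < i)%N].

Definition cand (Ti : {set 'I_N} -> {set 'I_N}) (W : {set 'I_N}) (k : nat)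
   (A X : {set 'I_N}) : bool :=
  [&& X \in F, (#|Ti X| <= k)%N & Ti X \subset Ti A :|: W].

Definition sel (Ti : {set 'I_N} -> {set 'I_N}) (W : {set 'I_N}) (k : nat) (A : {set 'I_N}) : {set 'I_N} :=
  odflt A [pick X | cand Ti W k A X &&
     [forall Y, cand Ti W k A Y ==> (#|Ti X :\: W| <= #|Ti Y :\: W|)%N]].

Definition step (Ti : {set 'I_N} -> {set 'I_N}) (W : {set 'I_N}) (k : nat) (A : {set 'I_N}) := Ti (sel Ti W k A) :\: W.

Fixpoint T (i : nat) (c : col) : {set 'I_N} -> {set 'I_N} :=
  match i with
  | 0 => id
  | i.+1 => step (T i c) (Wc c i) (n %/ 2 ^ i)
  end.

Definition good i c A := (#|T i c A| <= n %/ 2 ^ i)%N.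

Lemma sel_in Ti W k A : A \in F -> sel Ti W k A \in F.
Proof.
move=> AF; rewrite /sel; case: pickP => [X /andP[/and3P[]] //|_ /=]; done.
Qed.

Lemma sel_spec Ti W k A : A \in F -> (#|Ti A| <= k)%N ->
  cand Ti W k A (sel Ti W k A) /\
  forall Y, cand Ti W k A Y -> (#|Ti (sel Ti W k A) :\: W| <= #|Ti Y :\: W|)%N.
Proof.
move=> AF gA; rewrite /sel; case: pickP => [X /andP[cX /forallP mX]|none] /=.
  by split=> // Y cY; have := mX Y; rewrite cY.
have cA : cand Ti W k A A by rewrite /cand AF gA subsetUl.
case: (arg_minnP (fun X => #|Ti X :\: W|) cA) => X cX mX.
have := none X; rewrite cX /=; move/negbT/forallPn => [Y].
by rewrite negb_imply => /andP[cY]; rewrite mX.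
Qed.

Lemma step_sub Ti W k A : step Ti W k A \subset Ti A.
Proof.
rewrite /step /sel; case: pickP => [X /andP[/and3P[_ _ sX] _]|_] /=.
  apply/subsetP => x; rewrite inE => /andP[xW xX].
  by move/subsetP: sX => /(_ x xX); rewrite inE (negbTE xW) orbF.
by apply: subsetDl.
Qed.

Lemma T_sub i c A : T i c A \subset A.
Proof.
elim: i A => [|i IH] A /=; first exact: subxx.
exact: subset_trans (step_sub _ _ _ _) (IH A).
Qed.

Lemma T_disj i c A : A \in F -> forall x, x \in T i c A -> (i <= c x)%N.
Proof.
elim: i A => [|i IH] A AF x //=.
rewrite /step inE /Wc inE => /andP[xi /(IH _ (sel_in _ _ _ AF))].
by rewrite leq_eqVlt eq_sym (negbTE xi).
Qed.

Lemma T_mem i c A : A \in F -> exists2 C, C \in F & C \subset T i c A :|: Rc c i.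
Proof.
elim: i A => [|i IH] A AF /=.
  by exists A => //; apply: subsetUl.
have [C CF sC] := IH _ (sel_in (T i c) (Wc c i) (n %/ 2 ^ i) AF).
exists C => //; apply: (subset_trans sC); apply/subsetP => x.
rewrite /step /Wc /Rc !inE => /orP[xT|xi].
  by rewrite xT andbT; case: (nat_of_ord (c x) =P i) => [->|/eqP H]; rewrite ?ltnSn ?orbT /=.
by rewrite (ltn_trans xi (ltnSn i)) orbT.
Qed.


Lemma T_view i c c' : (forall x, (c x < i)%N || (c' x < i)%N -> c x = c' x) ->
  T i c = T i c'.
Proof.
elim: i => [//|i IH] H /=.
have -> : T i c = T i c'.
  by apply: IH => x hx; apply: H; case/orP: hx => h; rewrite (ltn_trans h (ltnSn i)) ?orbT.
have -> // : Wc c i = Wc c' i.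
apply/setP => x; rewrite /Wc !inE.
case: (eqVneq (nat_of_ord (c x)) i) => [ci|ci].
  by rewrite -(H x) ci ?eqxx ?ltnSn.
case: (eqVneq (nat_of_ord (c' x)) i) => [ci'|//].
have := H x; rewrite ci' ltnSn orbT => /(_ isT) e.
by move: ci; rewrite e ci' eqxx.
Qed.

Definition Bstar i c : {set 'I_N} :=
  odflt set0 [pick X | [&& X \in F, good i c X & T i c X \subset Wc c i]].
Definition K i c := T i c (Bstar i c).

Definition recolor c (S : {set 'I_N}) (i : nat) : col :=
  [ffun x => if x \in S then inord i else c x].

Lemma encode i c A : (i <= M)%N -> A \in F -> good i c A -> 
  let S := T i.+1 c A in
  S \subset K i (recolor c S i) /\ (#|K i (recolor c S i)| <= n %/ 2 ^ i)%N.
Proof.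
move=> iM AF gA S.
set c' := recolor c S i.
have Sdisj : forall x, x \in S -> (i.+1 <= c x)%N by move=> x; apply: T_disj.
set k := (n %/ 2 ^ i)%N.
have [cX mX] := @sel_spec (T i c) (Wc c i) k A AF gA.
set X := sel _ _ _ _ in cX mX.
have SE : S = T i c X :\: Wc c i by [].
have SsubA : S \subset T i c A by apply: step_sub.
clearbody S X.
have view : T i c' = T i c.
  apply: T_view => x; rewrite /c' /recolor ffunE.
  case: ifP => [xS|//]; rewrite inordK ?ltnS // ltnn /=.
  by move=> h; have := ltn_trans h (Sdisj x xS); rewrite ltnn.
have WE : Wc c' i = Wc c i :|: S.
  apply/setP => x; rewrite /Wc /c' /recolor !inE ffunE.
  case: ifP => xS; [by rewrite inordK ?ltnS ?eqxx ?orbT | by rewrite orbF].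
case/and3P: cX => XF gX sX.
have hX : [&& X \in F, good i c' X & T i c' X \subset Wc c' i].
  rewrite XF /good view gX /= WE; apply/subsetP => x xX.
  by rewrite inE; case xW: (x \in Wc c i) => //=; rewrite SE inE xW xX.
rewrite /K /Bstar; case: pickP => [B /and3P[BF gB sB]|/(_ X)]; last by rewrite hX.
split; last exact: gB.
move: gB; rewrite /good view => gB.
rewrite view in sB *.
have cB : cand (T i c) (Wc c i) k A B.
  rewrite /cand BF /=; apply/andP; split; first exact: gB.
  rewrite (subset_trans sB) // WE.
  by apply/subsetP => x; rewrite !inE => /orP[->|/(subsetP SsubA) ->]; rewrite ?orbT.
have le1 := mX B cB.
have sub1 : T i c B :\: Wc c i \subset S.
  apply/subsetP => x; rewrite in_setD => /andP[xW xB].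
  by move/subsetP: sB => /(_ x xB); rewrite WE in_setU (negbTE xW).
have eqS : T i c B :\: Wc c i = S.
  by apply/eqP; rewrite eqEcard sub1 /= SE.
by rewrite -eqS subsetDl.
Qed.


Definition bad i := [set p : col * {set 'I_N} |
  [&& p.2 \in F, good i p.1 p.2 & ~~ good i.+1 p.1 p.2]].
Definition enc i (p : col * {set 'I_N}) : col * {set 'I_N} :=
  (recolor p.1 (T i.+1 p.1 p.2) i, T i.+1 p.1 p.2).
Definition agree (c' : col) (S : {set 'I_N}) :=
  [set c : col | [forall x, (x \notin S) ==> (c x == c' x)]].

Lemma card_agree c' S : (#|agree c' S| <= M.+1 ^ #|S|)%N.
Proof.
pose g (c : col) : col := [ffun x => if x \in S then c x else @ord0 M].
have inj : {in agree c' S &, injective g}.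
  move=> c1 c2; rewrite !inE => /forallP h1 /forallP h2 e.
  apply/ffunP => x; have := congr1 (fun f : col => f x) e; rewrite /g !ffunE.
  case: ifP => // xS _; have := h1 x; have := h2 x; rewrite xS /= => /eqP -> /eqP ->.
  done.
rewrite -(card_in_imset inj).
have -> : (M.+1 ^ #|S| = #|pffun_on (@ord0 M) S predT|)%N.
  by rewrite card_pffun_on; congr (_ ^ _)%N; rewrite cardT size_enum_ord.
apply: subset_leq_card; apply/subsetP => _ /imsetP[c _ ->].
apply/pffun_onP; split; last by move=> y _.
apply/subsetP => x; rewrite inE /g ffunE; case: ifP => //; by rewrite eqxx.
Qed.

Lemma fiber_sub i c' S :
  [set p in bad i | enc i p == (c', S)] \subset setX (agree c' S) [set A in F | S \subset A].
Proof.
apply/subsetP => [[c A]]; rewrite !inE /= => /andP[/and3P[AF _ _] /eqP [e1 e2]].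
rewrite AF /=; apply/andP; split; last by rewrite -e2; exact: (T_sub i.+1 c A).
apply/forallP => x; apply/implyP => xS.
by rewrite -e1 /recolor ffunE e2 (negbTE xS).
Qed.

Lemma fiber_cond i c' S p : (i <= M)%N -> p \in [set p in bad i | enc i p == (c', S)] ->
  (S \subset K i c') && (n %/ 2 ^ i.+1 < #|S|)%N.
Proof.
case: p => c A iM; rewrite !inE /= => /andP[/and3P[AF gA ngA] /eqP [e1 e2]].
have [h _] := encode iM AF gA; rewrite -e2 -e1 /= e2 in h *.
by rewrite h /=; rewrite /good -ltnNge in ngA; rewrite -e2.
Qed.

Lemma card_partition (A : {set col * {set 'I_N}}) (f : col * {set 'I_N} -> col * {set 'I_N}) :
  #|A| = (\sum_q #|[set p in A | f p == q]|)%N.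
Proof.
rewrite -sum1_card (partition_big f predT) //; apply: eq_bigr => q _.
by rewrite -sum1_card; apply: eq_bigl => p; rewrite !inE.
Qed.


Variables (R : realFieldType) (r : R).
Local Open Scope ring_scope.
Hypothesis r_gt0 : (0 < r)%R.
Hypothesis spreadF : forall S : {set 'I_N},
  (#|[set G in F | S \subset G]|%:R : R) <= r ^- #|S| * #|F|%:R.

Local Open Scope ring_scope.

Lemma fiber_bound i c' S : (i <= M)%N ->
  (#|[set p in bad i | enc i p == (c', S)]|%:R : R) <=
  (if (S \subset K i c') && (n %/ 2 ^ i.+1 < #|S|)%N
   then ((M.+1)%:R / r) ^+ #|S| * #|F|%:R else 0).
Proof.
move=> iM.
have [E|[p pin]] := set_0Vmem [set p in bad i | enc i p == (c', S)].
  by rewrite E cards0; case: ifP => // _; rewrite mulr_ge0 ?exprn_ge0 ?divr_ge0 ?(ltW r_gt0).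
rewrite (fiber_cond iM pin).
apply: (@le_trans _ _ (#|agree c' S|%:R * #|[set A in F | S \subset A]|%:R)).
  by rewrite -natrM ler_nat -cardsX; apply: subset_leq_card; apply: fiber_sub.
rewrite expr_div_n -mulrA; apply: ler_pM => //.
  by rewrite -natrX ler_nat card_agree.
Qed.


Lemma K_small i c : (#|K i c| <= n %/ 2 ^ i)%N.
Proof.
rewrite /K /Bstar; case: pickP => [X /and3P[_ gX _] //|_] /=.
by have := T_sub i c set0; rewrite subset0 => /eqP ->; rewrite cards0.
Qed.

Lemma round_bound i : (i <= M)%N -> (M.+1)%:R / r <= 1 ->
  (#|bad i|%:R : R) <= #|{: {ffun 'I_N -> 'I_M.+1}}|%:R * ((2 ^ (n %/ 2 ^ i))%:R *
     (((M.+1)%:R / r) ^+ (n %/ 2 ^ i.+1).+1 * #|F|%:R)).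
Proof.
move=> iM y1.
set y := (M.+1)%:R / r.
have y0 : 0 <= y by rewrite divr_ge0 ?(ltW r_gt0).
set s := ((n %/ 2 ^ i.+1).+1)%N.
set G := fun (c' : col) (S : {set 'I_N}) =>
  if (S \subset K i c') && (n %/ 2 ^ i.+1 < #|S|)%N then y ^+ #|S| * #|F|%:R else 0.
rewrite (card_partition _ (enc i)) natr_sum.
apply: (@le_trans _ _ (\sum_(q : col * {set 'I_N}) G q.1 q.2)).
  by apply: ler_sum => -[c' S] _; exact: fiber_bound.
rewrite -(pair_big xpredT xpredT G) /=.
rewrite mulr_natl -sumr_const; apply: ler_sum => c' _.
have C0 : 0 <= y ^+ s * #|F|%:R by rewrite mulr_ge0 ?exprn_ge0.
apply: (@le_trans _ _ (\sum_(S : {set 'I_N}) if S \subset K i c' then y ^+ s * #|F|%:R else 0)).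
  apply: ler_sum => S _; rewrite /G; case: ifP => [/andP[-> lt]|_].
    by apply: (ler_wpM2r (ler0n R _)); apply: ler_wiXn2l.
  by case: ifP.
rewrite -big_mkcond /=.
rewrite (eq_bigl (fun S => S \in powerset (K i c'))); last by move=> S; rewrite powersetE.
rewrite sumr_const card_powerset -[X in X <= _]mulr_natl.
by apply: (ler_wpM2r C0); rewrite ler_nat; apply: leq_pexp2l => //; exact: K_small.
Qed.


Definition fail j := [set p : col * {set 'I_N} | (p.2 \in F) && ~~ good j p.1 p.2].

Hypothesis sizeF : forall A, A \in F -> (#|A| <= n)%N.

Lemma fail_card L : (#|fail L| <= \sum_(i < L) #|bad i|)%N.
Proof.
elim: L => [|L IH].
  rewrite big_ord0 leqn0 cards_eq0; apply/eqP/setP => -[c A]; rewrite !inE /=.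
  by case AF: (A \in F) => //=; rewrite /good expn0 divn1 sizeF.
rewrite big_ord_recr /=.
apply: (leq_trans _ (leq_add IH (leqnn _))).
apply: (leq_trans _ (leq_card_setU _ _)); apply: subset_leq_card.
apply/subsetP => -[c A]; rewrite !inE /= => /andP[AF ng]; rewrite AF ng /=.
by case: (good L c A).
Qed.

Lemma k_rec i : (n %/ 2 ^ i <= 2 * (n %/ 2 ^ i.+1) + 1)%N.
Proof.
rewrite expnSr divnMA; set k := (n %/ 2 ^ i)%N.
by have := divn_eq k 2; have := ltn_pmod k (isT : (0 < 2)%N); lia.
Qed.

Lemma k_low L i : (2 ^ L <= 2 * n)%N -> (i < L)%N -> (L - i <= (n %/ 2 ^ i.+1).+1)%N.
Proof.
move=> hL iL.
case: (ltnP i.+1 L) => [lt|ge]; last first.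
  by move: iL ge; generalize (n %/ 2 ^ i.+1)%N; lia.
set m := (L - i.+2)%N.
have eL : L = (m + i.+2)%N by rewrite /m subnK.
have h1 : (2 ^ m <= n %/ 2 ^ i.+1)%N.
  rewrite leq_divRL ?expn_gt0 // -expnD.
  by move: hL; rewrite eL addnS expnS leq_pmul2l.
have h2 := ltn_expl m (isT : (1 < 2)%N).
by move: h1 h2 eL; generalize (n %/ 2 ^ i.+1)%N; generalize (2 ^ m)%N; lia.
Qed.

Lemma term_bound L i (y : R) : (2 ^ L <= 2 * n)%N -> (i < L)%N ->
  0 <= y -> 4 * y <= 1 ->
  (2 ^ (n %/ 2 ^ i))%:R * y ^+ (n %/ 2 ^ i.+1).+1 <= (4 * y) ^+ (L - i).
Proof.
move=> hL iL y0 y4.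
set s := ((n %/ 2 ^ i.+1).+1)%N.
apply: (@le_trans _ _ ((4 * y) ^+ s)); last first.
  apply: (ler_wiXn2l _ y4); [by rewrite mulr_ge0 | exact: (k_low hL iL)].
rewrite exprMn; apply: (ler_wpM2r (exprn_ge0 _ y0)).
rewrite -natrX ler_nat (_ : 4 = 2 ^ 2)%N // -expnM.
by apply: leq_pexp2l => //; have := k_rec i; rewrite /s; lia.
Qed.


Lemma main_count L : (n < 2 ^ L)%N -> (2 ^ L <= 2 * n)%N -> (L <= M.+1)%N ->
  F != set0 -> 32 * (M.+1)%:R <= r ->
  (#|[set c : col | ~~ [exists A in F, A \subset Rc c L]]|%:R : R) < #|{: {ffun 'I_N -> 'I_M.+1}}|%:R / 2.
Proof.
move=> hL1 hL2 LM Fn0 hr.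
set Bc := [set c : col | _].
set y := (M.+1)%:R / r.
have y0 : 0 <= y by rewrite divr_ge0 ?(ltW r_gt0).
have y32 : y <= 1 / 32.
  by rewrite /y ler_pdivrMr // mul1r ler_pdivlMl ?ltr0n // mulrC.
have y1 : y <= 1 by lra.
have y4 : 4 * y <= 1 by lra.
have sub : setX Bc F \subset fail L.
  apply/subsetP => -[c A]; rewrite !inE /= => /andP[cB AF]; rewrite AF /=.
  apply/negP => gL.
  have T0 : T L c A = set0.
    apply/eqP; rewrite -cards_eq0 -leqn0; apply: (leq_trans gL).
    by rewrite divn_small.
  have [C CF sC] := T_mem L c AF; rewrite T0 set0U in sC.
  by move/existsP: cB; apply; exists C; rewrite CF.
have h1 : (#|Bc| * #|F| <= \sum_(i < L) #|bad i|)%N.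
  by rewrite -cardsX; apply: (leq_trans (subset_leq_card sub)); apply: fail_card.
have Fpos : (0 : R) < #|F|%:R by rewrite ltr0n lt0n cards_eq0.
have cpos : (0 : R) < #|{: {ffun 'I_N -> 'I_M.+1}}|%:R by rewrite ltr0n card_ffun card_ord expn_gt0.
have h2 : (#|Bc|%:R : R) * #|F|%:R <= #|{: {ffun 'I_N -> 'I_M.+1}}|%:R * #|F|%:R * (2 * (4 * y)).
  apply: (@le_trans _ _ (\sum_(i < L) (#|bad i|%:R : R))).
    by rewrite -natrM -natr_sum ler_nat.
  apply: (@le_trans _ _ (\sum_(i < L) #|{: {ffun 'I_N -> 'I_M.+1}}|%:R * #|F|%:R * (4 * y) ^+ (L - i))).
    apply: ler_sum => i _.
    have iM : (i <= M)%N by rewrite -ltnS (leq_trans (ltn_ord i) LM).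
    apply: (le_trans (round_bound iM y1)).
    rewrite -mulrA; apply: (ler_wpM2l (ler0n R _)).
    rewrite -/y mulrA [X in _ <= X]mulrC; apply: (ler_wpM2r (ler0n R _)).
    exact: (term_bound hL2 (ltn_ord i) y0 y4).
  rewrite -mulr_sumr; apply: (ler_wpM2l (mulr_ge0 (ler0n R _) (ler0n R _))).
  apply: geo; [by rewrite mulr_ge0 | lra].
have h3 : (#|Bc|%:R : R) <= #|{: {ffun 'I_N -> 'I_M.+1}}|%:R * (2 * (4 * y)).
  by rewrite -(ler_pM2r Fpos) mulrAC.
have h4 : 2 * (4 * y) <= 1 / 4 by lra.
apply: (le_lt_trans h3).
have : #|{: {ffun 'I_N -> 'I_M.+1}}|%:R * (2 * (4 * y)) <= #|{: {ffun 'I_N -> 'I_M.+1}}|%:R * (1 / 4) :> R.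
  by apply: ler_wpM2l.
move: cpos; set C := (#|{: {ffun 'I_N -> 'I_M.+1}}|%:R : R); lra.
Qed.

End Rounds.





From mathcomp Require Import all_classical all_reals all_analysis.
Import Order.TTheory GRing.Theory Num.Theory.
Local Open Scope ring_scope.

Theorem corollary2p7 (R : realType) (n N : nat) (r : R)
  (G1 G2 : {set {set 'I_N}}) :
  (0 < n)%N -> (n <= N)%N -> 0 < r ->
  G1 != finset.set0 -> G2 != finset.set0 ->
  (forall G, G \in G1 -> (#|G| <= n)%N) ->
  (forall G, G \in G2 -> (#|G| <= n)%N) ->
  spread r G1 -> spread r G2 ->
  (2 ^+ 12 : R) * log2 (2 * n%:R) <= r ->
  exists2 A, A \in G1 & exists2 B, B \in G2 & A :&: B = finset.set0.
Proof.
move=> n0 nN r0 G1n G2n s1 s2 sp1 sp2 hr.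
have /andP[tl1 tl2] := trunc_log_bounds (isT : (1 < 2)%N) n0.
set tl := trunc_log 2 n in tl1 tl2.
set L := tl.+1.
have hL1 : (n < 2 ^ L)%N by [].
have hL2 : (2 ^ L <= 2 * n)%N by rewrite /L expnS leq_pmul2l.
set M := (L + L).-1.
have eM : M.+1 = (L + L)%N by rewrite /M prednK // addn_gt0.
have LM : (L <= M.+1)%N by rewrite eM leq_addr.
have ln2 : 0 < ln (2 : R) by apply: ln_gt0; rewrite ltr1n.
have Llog : (L%:R : R) <= log2 (2 * n%:R).
  rewrite /log2 ler_pdivlMr // mulrC [X in X <= _]mulr_natr -lnXn //.
  rewrite ler_ln ?posrE ?exprn_gt0 ?mulr_gt0 ?ltr0n //.
  by rewrite -natrX -natrM ler_nat.
have hr32 : 32 * (M.+1)%:R <= r.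
  rewrite eM natrD.
  have e : (2 ^+ 12 : R) = 4096%:R by rewrite -natrX.
  rewrite e in hr.
  have : (0 : R) <= L%:R by [].
  lra.
have c1 := @main_count N M n G1 R r r0 sp1 s1 L hL1 hL2 LM G1n hr32.
have c2 := @main_count N M n G2 R r r0 sp2 s2 L hL1 hL2 LM G2n hr32.
set B1 := [set c | _] in c1.
set B2' := [set c | _] in c2.
pose flip (c : {ffun 'I_N -> 'I_M.+1}) : {ffun 'I_N -> 'I_M.+1} := [ffun x => rev_ord (c x)].
have flipK : involutive flip by move=> c; apply/ffunP => x; rewrite !ffunE rev_ordK.
set B2 := [set c : {ffun 'I_N -> 'I_M.+1} | ~~ [exists B in G2, B \subset [set x | (L <= c x)%N]]].
have eB2 : B2 = flip @^-1: B2'.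
  apply/finset.setP => c; rewrite !inE.
  have -> : [set x | (L <= c x)%N] = Rc (flip c) L.
    apply/finset.setP => x; rewrite !inE ffunE /=.
    have := ltn_ord (c x); move: eM; lia.
  by [].
have cB2 : #|B2| = #|B2'| by rewrite eB2 card_preimset //; exact: inv_inj.
have [c cU] : exists c, c \notin B1 :|: B2.
  case/boolP: [exists c, c \notin B1 :|: B2] => [/existsP //|/existsPn h]; exfalso.
  have : (#|{: {ffun 'I_N -> 'I_M.+1}}| <= #|B1| + #|B2|)%N.
    apply: (leq_trans _ (leq_card_setU _ _)); apply: subset_leq_card.
    by apply/fintype.subsetP => c _; have := h c; rewrite negbK.
  rewrite -(ler_nat R) natrD cB2 => hle.
  have : (#|B1|%:R : R) + #|B2'|%:R < #|{: {ffun 'I_N -> 'I_M.+1}}|%:R.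
    by move: c1 c2; set C := (#|{: {ffun 'I_N -> 'I_M.+1}}|%:R : R); lra.
  by rewrite ltNge hle.
move: cU; rewrite finset.in_setU negb_or !inE !negbK => /andP[/existsP[A /andP[AG1 sA]] /existsP[B /andP[BG2 sB]]].
exists A => //; exists B => //.
apply/finset.setP => x; rewrite !inE; apply/negP => /andP[xA xB].
move/fintype.subsetP: sA => /(_ x xA); move/fintype.subsetP: sB => /(_ x xB).
by rewrite /Rc !inE => h1 h2; move: (leq_trans h1 h2); rewrite ltnn.
Qed.
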